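(* Let $y_0\in\mathbb{R}$, $b>0$, $\epsilon>0$, and let $f:[y_0,\infty)\to\mathbb{R}$ be such that $p:=1/f$ is well defined and twice differentiable on $[y_0,\infty)$, with $f(y_0)>0$, $f'(y)>0$ and $p''(y)>0$ for all $y\ge y_0$. Assume $b<\int_{y_0}^{\infty}p(y)\,dy$ (possibly $+\infty$), so that the solution $y(x)$ of $y'=f(y)$, $y(0)=y_0$, exists on $[0,b]$; equivalently $y(x)$ is defined by $\int_{y_0}^{y(x)}p(y)\,dy=x$. For $h>0$ and integers $N\ge0$ let $\Sigma_{l,h,N}=\sum_{i=1}^{N}h\,p(y_0+hi)$. Let $0<x_1<x_2<\dots<x_N=b$ be a mesh. Let $n_2^{(1)}$ be the smallest positive integer $n$ with $\Sigma_{l,\epsilon,n}\ge b$ (assumed to exist), and let $j$ be a positive integer satisfying $$j\ge 1+\frac12\cdot\frac{p(y_0)-p(y_0+\epsilon n_2^{(1)}-\epsilon)}{p(y_0+\epsilon n_2^{(1)})}\qquad\text{or}\qquad j\ge\frac12\Big(1+\frac{p(y_0)}{p(y_0+\epsilon n_2^{(1)})}\Big).$$ Put $h^{(j)}=\epsilon/j$, and for each $k$ with $1\le k\le N$ let $n_{2,k}^{(j)}$ be the smallest positive integer $n$ with $\Sigma_{l,h^{(j)},n}\ge x_k$, and $y_{x_k}:=y_0+h^{(j)}n_{2,k}^{(j)}$. Then $$|y(x_k)-y_{x_k}|<\epsilon\quad\text{for all }k,\ 1\le k\le N.$$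
   Context: $\Sigma_{l,h,N}$ is the lower rectangular (right-endpoint) sum with step $h$ for $\int_{y_0}^{y_0+hN}p(y)\,dy$; the empty sum is $0$. *)

(* Defs.v *)
From Stdlib Require Import Reals.
From Coquelicot Require Import Coquelicot.
Open Scope R_scope.

Fixpoint Sigma_l (p : R -> R) (y0 h : R) (N : nat) : R :=
  match N with
  | O => 0
  | S n => Sigma_l p y0 h n + h * p (y0 + h * INR (S n))
  end.

Definition least_pos_index (p : R -> R) (y0 h c : R) (n : nat) : Prop :=
  (0 < n)%nat /\ c <= Sigma_l p y0 h n /\
  (forall m : nat, (0 < m)%nat -> (m < n)%nat -> Sigma_l p y0 h m < c).

(* Main.v *)
Require Import Defs.
From Stdlib Require Import Reals Lra Lia.
From Coquelicot Require Import Coquelicot.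
Open Scope R_scope.

Lemma cont_of_derive (F : R -> R) (x l : R) : is_derive F x l -> continuity_pt F x.
Proof. intros H. apply continuity_pt_filterlim. apply (ex_derive_continuous (K:=R_AbsRing) (V:=R_NormedModule) F x). exists l; exact H. Qed.

Lemma mono_up (F dF : R -> R) (y0 : R) (HD: forall x, y0 <= x -> is_derive F x (dF x))
  (Hs: forall x, y0 <= x -> 0 <= dF x) a b : y0 <= a -> a <= b -> F a <= F b.
Proof.
  intros Ha Hab. destruct (MVT_gen F a b dF) as [c [Hc E]]; cbv zeta in *.
  - intros z Hz. rewrite Rmin_left in Hz by lra. apply HD. lra.
  - intros z Hz. rewrite Rmin_left in Hz by lra. apply cont_of_derive with (dF z). apply HD. lra.
  - rewrite Rmin_left in Hc by lra. assert (0 <= dF c) by (apply Hs; lra). nra.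
Qed.

Definition good (p p1 p2 : R -> R) (y0 : R) :=
  (forall y, y0<=y -> is_derive p y (p1 y) /\ is_derive p1 y (p2 y) /\ 0 < p2 y) /\
  (forall y, y0 <= y -> p1 y <= 0) /\ (forall y, y0<=y -> 0 < p y).

Lemma g_mono (p p1 p2 : R -> R) (y0 : R) : good p p1 p2 y0 -> forall u v, y0 <= u -> u <= v -> p v <= p u.
Proof.
  intros [H1 [H2 H3]] u v Hu Huv.
  assert (- p u <= - p v); [|lra].
  apply (mono_up (fun t => - p t) (fun t => - p1 t) y0); auto.
  - intros z Hz. apply (is_derive_opp (K:=R_AbsRing) (V:=R_NormedModule) p z (p1 z)). apply H1; auto.
  - intros z Hz. specialize (H2 z Hz). lra.
Qed.

Lemma g_mono1 (p p1 p2 : R -> R) (y0 : R) : good p p1 p2 y0 -> forall u v, y0 <= u -> u <= v -> p1 u <= p1 v.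
Proof.
  intros [H1 [H2 H3]] u v Hu Huv.
  apply (mono_up p1 p2 y0); auto.
  - intros z Hz. apply H1; auto.
  - intros z Hz. destruct (H1 z Hz) as [_ [_ ?]]. lra.
Qed.

Lemma g_exR p p1 p2 y0 : good p p1 p2 y0 -> forall a b, y0 <= a -> y0 <= b -> ex_RInt p a b.
Proof.
  intros [H1 _] a b Ha Hb. apply (ex_RInt_continuous (V:=R_CompleteNormedModule)). intros z Hz.
  apply (ex_derive_continuous (K:=R_AbsRing) (V:=R_NormedModule)). exists (p1 z). apply H1.
  assert (y0 <= Rmin a b) by (apply Rmin_glb; lra). lra.
Qed.

Lemma g_chord (p p1 p2 : R -> R) (y0 : R) : good p p1 p2 y0 -> forall a h t, y0 <= a -> 0 < h -> a <= t <= a+h ->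
  p t <= p a + (t-a)*((p (a+h) - p a)/h).
Proof.
  intros G a h t Ha Hh Ht. pose proof G as [H1 _].
  destruct (MVT_gen p a t p1) as [c1 [Hc1 E1]]; cbv zeta in *.
  - intros z Hz. rewrite Rmin_left in Hz by lra. apply H1. lra.
  - intros z Hz. rewrite Rmin_left in Hz by lra. apply cont_of_derive with (p1 z). apply H1. lra.
  - destruct (MVT_gen p t (a+h) p1) as [c2 [Hc2 E2]]; cbv zeta in *.
    + intros z Hz. rewrite Rmin_left in Hz by lra. apply H1. lra.
    + intros z Hz. rewrite Rmin_left in Hz by lra. apply cont_of_derive with (p1 z). apply H1. lra.
    + rewrite Rmin_left in Hc1, Hc2 by lra. rewrite Rmax_right in Hc1, Hc2 by lra.
      assert (Hs: p1 c1 <= p1 c2) by (apply (g_mono1 p p1 p2 y0); auto; lra).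
      assert (Eq: p (a+h) - p a = p1 c1 * (t-a) + p1 c2 * (a+h-t)) by lra.
      rewrite Eq.
      assert (K: (t - a) * ((p1 c1 * (t - a) + p1 c2 * (a + h - t)) / h) - p1 c1 * (t-a)
               = (t-a)*(a+h-t)*(p1 c2 - p1 c1) / h) by (field; lra).
      assert (0 <= (t-a)*(a+h-t)*(p1 c2 - p1 c1) / h).
      { apply Rmult_le_pos; [|left; apply Rinv_0_lt_compat; lra].
        apply Rmult_le_pos; [nra|lra]. }
      lra.
Qed.

Lemma g_low (p p1 p2 : R -> R) (y0 : R) : good p p1 p2 y0 -> forall a b, y0 <= a -> a <= b ->
  (b - a) * p b <= RInt p a b.
Proof.
  intros G a b Ha Hab.
  apply (is_RInt_le (fun _ => p b) p a b ((b-a) * p b) (RInt p a b)); auto.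
  - apply (is_RInt_const a b (p b)).
  - apply (RInt_correct (V:=R_CompleteNormedModule)). apply (g_exR p p1 p2 y0); auto; lra.
  - intros z Hz. apply (g_mono p p1 p2 y0); auto; lra.
Qed.

Lemma g_trap (p p1 p2 : R -> R) (y0 : R) : good p p1 p2 y0 -> forall a h, y0 <= a -> 0 < h ->
  RInt p a (a+h) <= h * (p a + p (a+h)) / 2.
Proof.
  intros G a h Ha Hh.
  set (K := (p (a+h) - p a)/h).
  apply (is_RInt_le p (fun t => p a + (t-a)*K) a (a+h)); [lra| | |].
  - apply (RInt_correct (V:=R_CompleteNormedModule)). apply (g_exR p p1 p2 y0); auto; lra.
  - set (Gf := fun t => p a * t + (t-a)^2/2*K).
    assert (E: h * (p a + p (a+h)) / 2 = minus (Gf (a+h)) (Gf a)).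
    { unfold minus, plus, opp, Gf; simpl. unfold K. field. lra. }
    rewrite E. apply (is_RInt_derive (V:=R_CompleteNormedModule)).
    + intros z _. unfold Gf. auto_derive; [exact I|field].
    + intros z _. apply (ex_derive_continuous (K:=R_AbsRing) (V:=R_NormedModule)).
      auto_derive. exact I.
  - intros z Hz. apply (g_chord p p1 p2 y0); auto; lra.
Qed.

Lemma Sig_S p y0 h n : Sigma_l p y0 h (S n) = Sigma_l p y0 h n + h * p (y0 + h * INR (S n)).
Proof. reflexivity. Qed.

Lemma g_sig_add (p p1 p2 : R -> R) (y0 h : R) : good p p1 p2 y0 -> 0 < h -> forall M d,
  Sigma_l p y0 h M + INR d * h * p (y0 + h * INR (M + d)) <= Sigma_l p y0 h (M + d).
Proof.
  intros G Hh M d. induction d as [|d IH].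
  - rewrite Nat.add_0_r. simpl. lra.
  - rewrite Nat.add_succ_r. rewrite Sig_S.
    assert (HM := pos_INR (M + d)). assert (Hd := pos_INR d).
    rewrite !S_INR.
    assert (p (y0 + h * (INR (M + d) + 1)) <= p (y0 + h * INR (M + d))).
    { apply (g_mono p p1 p2 y0); auto; nra. }
    assert (0 <= INR d * h * (p (y0 + h * INR (M + d)) - p (y0 + h * (INR (M + d) + 1)))).
    { apply Rmult_le_pos; nra. }
    nra.
Qed.

Lemma g_trap_sum (p p1 p2 : R -> R) (y0 h : R) : good p p1 p2 y0 -> 0 < h -> forall m,
  RInt p y0 (y0 + h * INR m) <= Sigma_l p y0 h m + h / 2 * (p y0 - p (y0 + h * INR m)).
Proof.
  intros G Hh m. induction m as [|m IH].
  - simpl. replace (y0 + h * 0) with y0 by ring. rewrite RInt_point. change (@zero (CompleteNormedModule.AbelianMonoid R_AbsRing R_CompleteNormedModule)) with 0. lra.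
  - assert (Hm := pos_INR m).
    rewrite Sig_S. rewrite !S_INR. replace (y0 + h * (INR m + 1)) with ((y0 + h * INR m) + h) by ring.
    assert (0 <= h * INR m) by nra.
    rewrite <- (RInt_Chasles p y0 (y0 + h * INR m)).
    2,3: apply (g_exR p p1 p2 y0 G); lra.
    assert (T := g_trap p p1 p2 y0 G (y0 + h * INR m) h ltac:(nra) Hh).
    change (plus ?a ?b) with (a + b). lra.
Qed.

Lemma g_low_sum (p p1 p2 : R -> R) (y0 h : R) : good p p1 p2 y0 -> 0 < h -> forall m,
  Sigma_l p y0 h m <= RInt p y0 (y0 + h * INR m).
Proof.
  intros G Hh m. induction m as [|m IH].
  - simpl. replace (y0 + h * 0) with y0 by ring. rewrite RInt_point. change (@zero (CompleteNormedModule.AbelianMonoid R_AbsRing R_CompleteNormedModule)) with 0. lra.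
  - assert (Hm := pos_INR m).
    rewrite Sig_S. rewrite !S_INR. replace (y0 + h * (INR m + 1)) with ((y0 + h * INR m) + h) by ring.
    assert (0 <= h * INR m) by nra.
    rewrite <- (RInt_Chasles p y0 (y0 + h * INR m)).
    2,3: apply (g_exR p p1 p2 y0 G); lra.
    assert (T := g_low p p1 p2 y0 G (y0 + h * INR m) ((y0 + h * INR m) + h) ltac:(nra) ltac:(lra)).
    change (plus ?a ?b) with (a + b). replace (y0 + h * INR m + h - (y0 + h * INR m)) with h in T by ring.
    lra.
Qed.

Lemma g_refine (p p1 p2 : R -> R) (y0 h eps : R) (j : nat) : good p p1 p2 y0 -> 0 < h ->
  h * INR j = eps -> forall m, Sigma_l p y0 eps m <= Sigma_l p y0 h (j * m).
Proof.
  intros G Hh Hj m. induction m as [|m IH].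
  - rewrite Nat.mul_0_r. simpl. lra.
  - rewrite Nat.mul_succ_r.
    assert (A := g_sig_add p p1 p2 y0 h G Hh (j * m) j).
    rewrite plus_INR, mult_INR in A.
    rewrite Sig_S. rewrite S_INR.
    replace (h * (INR j * INR m + INR j)) with (eps * (INR m + 1)) in A by (rewrite <- Hj; ring).
    replace (INR j * h) with eps in A by (rewrite <- Hj; ring).
    lra.
Qed.

Lemma mesh_mono (x : nat -> R) (N : nat) :
  (forall k, (1 <= k)%nat -> (k < N)%nat -> x k < x (S k)) ->
  forall a d, (1 <= a)%nat -> (a + d <= N)%nat -> x a <= x (a + d)%nat.
Proof.
  intros H a d Ha. induction d as [|d IH]; intros Hd.
  - rewrite Nat.add_0_r. lra.
  - rewrite Nat.add_succ_r. assert (x (a + d)%nat < x (S (a + d))) by (apply H; lia).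
    assert (x a <= x (a + d)%nat) by (apply IH; lia). lra.
Qed.

Theorem theorem3
  (y0 b eps : R) (f : R -> R) (ysol : R -> R) (N : nat) (x : nat -> R)
  (n21 j : nat)
  (Hb : 0 < b) (Heps : 0 < eps)
  (* p := 1/f well defined on [y0, oo) *)
  (Hfnz : forall y, y0 <= y -> f y <> 0)
  (* p twice differentiable on [y0, oo) with p'' > 0 *)
  (Hp2 : exists p1 p2 : R -> R, forall y, y0 <= y ->
       is_derive (fun t => / f t) y (p1 y) /\ is_derive p1 y (p2 y) /\ 0 < p2 y)
  (Hfy0 : 0 < f y0)
  (Hf' : forall y, y0 <= y -> ex_derive f y /\ 0 < Derive f y)
  (* b < int_{y0}^{oo} p  (the improper integral may be +oo) *)
  (Hint : Rbar_lt (Finite b) (Lim (fun Y => RInt (fun t => / f t) y0 Y) p_infty))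
  (* y(x) defined by int_{y0}^{y(x)} p = x on [0, b] *)
  (Hysol : forall t, 0 <= t <= b ->
       y0 <= ysol t /\ RInt (fun s => / f s) y0 (ysol t) = t)
  (* mesh 0 < x_1 < ... < x_N = b *)
  (HN : (1 <= N)%nat) (Hx1 : 0 < x 1%nat)
  (Hxinc : forall k, (1 <= k)%nat -> (k < N)%nat -> x k < x (S k))
  (HxN : x N = b)
  (* n_2^(1) *)
  (Hn21 : least_pos_index (fun t => / f t) y0 eps b n21)
  (* j *)
  (Hj0 : (0 < j)%nat)
  (Hj : INR j >= 1 + / 2 * ((/ f y0 - / f (y0 + eps * INR n21 - eps))
                             / (/ f (y0 + eps * INR n21)))
        \/ INR j >= / 2 * (1 + (/ f y0) / (/ f (y0 + eps * INR n21)))) :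
  forall (k n2k : nat), (1 <= k)%nat -> (k <= N)%nat ->
    least_pos_index (fun t => / f t) y0 (eps / INR j) (x k) n2k ->
    Rabs (ysol (x k) - (y0 + (eps / INR j) * INR n2k)) < eps.
Proof.
  intros k n2k Hk1 HkN Hn2k.
  destruct Hp2 as [p1 [p2 Hp]].
  set (p := fun t => / f t) in *.
  assert (Hfpos : forall y, y0 <= y -> 0 < f y).
  { intros y Hy. assert (f y0 <= f y); [|lra].
    apply (mono_up f (Derive f) y0); try lra.
    - intros z Hz. apply Derive_correct. apply Hf'; auto.
    - intros z Hz; left; apply Hf'; auto. }
  assert (G : good p p1 p2 y0).
  { split; [exact Hp|split].
    - intros y Hy. assert (E1 := is_derive_inv f y (Derive f y) (Derive_correct f y (proj1 (Hf' y Hy))) (Hfnz y Hy)).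
      assert (E2 : p1 y = - Derive f y / f y ^ 2).
      { rewrite <- (is_derive_unique _ _ _ (proj1 (Hp y Hy))).
        exact (is_derive_unique _ _ _ E1). }
      rewrite E2. assert (0 < f y ^ 2) by (apply pow_lt; auto).
      assert (0 < Derive f y) by apply Hf', Hy.
      unfold Rdiv. assert (0 < / f y ^ 2) by (apply Rinv_0_lt_compat; auto). nra.
    - intros y Hy. unfold p. apply Rinv_0_lt_compat; auto. }
  assert (Pmono := g_mono p p1 p2 y0 G).
  assert (Ppos : forall y, y0 <= y -> 0 < p y) by apply G.
  assert (Hxk : 0 < x k <= b).
  { assert (x 1%nat <= x (1 + (k - 1))%nat) by (apply (mesh_mono x N Hxinc); lia).
    assert (x k <= x (k + (N - k))%nat) by (apply (mesh_mono x N Hxinc); lia).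
    replace (1 + (k - 1))%nat with k in * by lia.
    replace (k + (N - k))%nat with N in * by lia. lra. }
  destruct (Hysol (x k) ltac:(lra)) as [HY HYint].
  set (Y := ysol (x k)) in *.
  set (h := eps / INR j) in *.
  assert (HjR : 0 < INR j) by (apply lt_0_INR; lia).
  assert (Hh : 0 < h) by (unfold h; apply Rdiv_lt_0_compat; lra).
  assert (Hhj : h * INR j = eps) by (unfold h; field; lra).
  destruct Hn2k as [Hn0 [Hge Hlt]].
  destruct n2k as [|n']; [lia|].
  destruct Hn21 as [Hm0 [Hbge Hblt]].
  destruct n21 as [|m21]; [lia|].
  assert (Hsn' : Sigma_l p y0 h n' < x k).
  { destruct n' as [|n'']. simpl. lra. apply Hlt; lia. }
  assert (Hnle : (n' < j * S m21)%nat).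
  { destruct (Nat.lt_ge_cases n' (j * S m21)) as [?|Hc]; auto. exfalso.
    assert (Sigma_l p y0 h (j * S m21) < x k) by (apply Hlt; lia).
    assert (Sigma_l p y0 eps (S m21) <= Sigma_l p y0 h (j * S m21))
      by (apply (g_refine p p1 p2 y0 h eps j G Hh Hhj)).
    lra. }
  set (Z := y0 + h * INR n').
  assert (Hn'p := pos_INR n').
  assert (HZ0 : y0 <= Z) by (unfold Z; nra).
  assert (HYup : Y <= Z + h).
  { destruct (Rle_or_lt Y (Z + h)) as [?|Hc]; auto. exfalso.
    assert (Ls := g_low_sum p p1 p2 y0 h G Hh (S n')).
    rewrite S_INR in Ls. replace (y0 + h * (INR n' + 1)) with (Z + h) in Ls by (unfold Z; ring).
    rewrite <- (RInt_Chasles p y0 (Z + h) Y) in HYint.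
    2,3: apply (g_exR p p1 p2 y0 G); lra.
    assert (Lw := g_low p p1 p2 y0 G (Z + h) Y ltac:(lra) ltac:(lra)).
    assert (0 < p Y) by (apply Ppos; lra).
    assert (0 < (Y - (Z + h)) * p Y) by (apply Rmult_lt_0_compat; lra).
    change (plus ?a ?b) with (a + b) in HYint. lra. }
  rewrite S_INR.
  replace (y0 + h * (INR n' + 1)) with (Z + h) by (unfold Z; ring).
  cut (Z - Y < h * (INR j - 1)).
  { intros Hc. rewrite Rabs_left1 by lra. lra. }
  set (W := y0 + h * INR (j * m21)).
  set (e := y0 + h * INR (j * S m21)).
  assert (Hm21 := pos_INR m21).
  assert (EW : y0 + eps * INR (S m21) - eps = W).
  { unfold W. rewrite mult_INR, S_INR. rewrite <- Hhj. ring. }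
  assert (Ee : y0 + eps * INR (S m21) = e).
  { unfold e. rewrite mult_INR, S_INR. rewrite <- Hhj. ring. }
  assert (Hj' : INR j >= 1 + / 2 * ((p y0 - p W) / p e) \/ INR j >= / 2 * (1 + p y0 / p e)).
  { rewrite <- EW, <- Ee. exact Hj. }
  assert (Hj1 : 1 <= INR j) by (change 1 with (INR 1); apply le_INR; lia).
  assert (HW0 : y0 <= W) by (unfold W; rewrite mult_INR; nra).
  assert (HWe : W <= e) by (unfold W, e; rewrite !mult_INR, S_INR; nra).
  assert (Hpe : 0 < p e) by (apply Ppos; lra).
  assert (HpWe : p e <= p W) by (apply Pmono; lra).
  assert (Hpy0W : p W <= p y0) by (apply Pmono; lra).
  assert (Key : p y0 - p W <= 2 * (INR j - 1) * p e).
  { destruct Hj' as [H1|H1].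
    - assert (E : 2 * p e * (/ 2 * ((p y0 - p W) / p e)) = p y0 - p W) by (field; lra).
      assert (0 <= 2 * p e * (INR j - 1 - / 2 * ((p y0 - p W) / p e))) by (apply Rmult_le_pos; lra).
      nra.
    - assert (E : 2 * p e * (/ 2 * (1 + p y0 / p e)) = p e + p y0) by (field; lra).
      assert (0 <= 2 * p e * (INR j - / 2 * (1 + p y0 / p e))) by (apply Rmult_le_pos; lra).
      nra. }
  assert (HZe : Z <= e).
  { unfold Z, e. assert (INR n' <= INR (j * S m21)) by (apply le_INR; lia). nra. }
  assert (HpZe : p e <= p Z) by (apply Pmono; lra).
  cut ((Z - Y) * p e < h * (INR j - 1) * p e).
  { intros Hc. apply (Rmult_lt_reg_r (p e)); lra. }
  destruct (Rlt_or_le Z Y) as [HZY|HYZ].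
  { assert (0 <= h * (INR j - 1) * p e) by (apply Rmult_le_pos; [apply Rmult_le_pos|]; lra).
    assert ((Z - Y) * p e < 0) by (apply Rmult_neg_pos; lra). lra. }
  destruct (Rle_or_lt Z W) as [HZW|HWZ].
  - assert (T := g_trap_sum p p1 p2 y0 h G Hh n'). fold Z in T.
    rewrite <- (RInt_Chasles p y0 Y Z) in T.
    2,3: apply (g_exR p p1 p2 y0 G); lra.
    change (plus ?a ?b) with (a + b) in T. rewrite HYint in T.
    assert (Lw := g_low p p1 p2 y0 G Y Z HY HYZ).
    assert (p W <= p Z) by (apply Pmono; lra).
    assert ((Z - Y) * p e <= (Z - Y) * p Z) by (apply Rmult_le_compat_l; lra).
    nra.
  - assert (Hlt' : (j * m21 < n')%nat).
    { apply INR_lt. unfold Z, W in HWZ. nra. }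
    destruct (Rle_or_lt Y W) as [HYW|HWY].
    + assert (A := g_sig_add p p1 p2 y0 h G Hh (j * m21) (n' - j * m21)).
      replace (j * m21 + (n' - j * m21))%nat with n' in A by lia. fold Z in A.
      rewrite minus_INR in A by lia.
      replace ((INR n' - INR (j * m21)) * h) with (Z - W) in A by (unfold Z, W; ring).
      assert (T := g_trap_sum p p1 p2 y0 h G Hh (j * m21)). fold W in T.
      rewrite <- (RInt_Chasles p y0 Y W) in T.
      2,3: apply (g_exR p p1 p2 y0 G); lra.
      change (plus ?a ?b) with (a + b) in T. rewrite HYint in T.
      assert (Lw := g_low p p1 p2 y0 G Y W HY HYW).
      assert ((Z - W) * p e <= (Z - W) * p Z) by (apply Rmult_le_compat_l; lra).
      assert ((W - Y) * p e <= (W - Y) * p W) by (apply Rmult_le_compat_l; lra).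
      nra.
    + assert (HS : INR n' + 1 <= INR j * (INR m21 + 1)).
      { rewrite <- S_INR, <- S_INR, <- mult_INR. apply le_INR. lia. }
      assert (h * (INR n' + 1) <= h * (INR j * (INR m21 + 1))) by (apply Rmult_le_compat_l; lra).
      assert (Z - W <= h * (INR j - 1)).
      { unfold Z, W. rewrite mult_INR. nra. }
      assert ((Z - Y) * p e < (h * (INR j - 1)) * p e) by (apply Rmult_lt_compat_r; lra).
      lra.
Qed.
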